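(* Let $n\in\mathbb{N}$, $1<p<q$, and $0<\omega<\omega_{p,q}$, where $$\omega_{p,q}=\frac{2(q-p)}{(p+1)(q-1)}\left[\frac{(p-1)(q+1)}{(p+1)(q-1)}\right]^{\frac{p-1}{q-p}}.$$ Let $f(u)=-\omega u+u^p-u^q$, $F(u)=\int_0^u f(s)\,ds=-\frac{\omega}{2}u^2+\frac{u^{p+1}}{p+1}-\frac{u^{q+1}}{q+1}$, and $$\Sigma(u)=2nF(u)-(n-2)uf(u)\qquad (u\ge 0).$$ Then there exist $0<B<C\le\infty$ (depending on $\omega,p,q$ and $n$) such that $\Sigma(u)<0$ for all $u\in(0,B)$ and $\Sigma(u)>0$ for all $u\in(B,C)$.
   Context: Throughout, $\omega_{p,q}$ is the threshold such that $F(u)>0$ for some $u>0$ if and only if $\omega<\omega_{p,q}$. *)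

(* Defs.v *)
From Stdlib Require Import Reals.
Open Scope R_scope.

Definition omega_pq (p q : R) : R :=
  2 * (q - p) / ((p + 1) * (q - 1)) *
  Rpower (((p - 1) * (q + 1)) / ((p + 1) * (q - 1))) ((p - 1) / (q - p)).

(* f(u) = -omega u + u^p - u^q  (real exponents; only used for u > 0) *)
Definition f_nl (omega p q u : R) : R :=
  - omega * u + Rpower u p - Rpower u q.

Definition F_nl (omega p q u : R) : R :=
  - omega / 2 * u ^ 2 + Rpower u (p + 1) / (p + 1) - Rpower u (q + 1) / (q + 1).

Definition Sigma (n : nat) (omega p q u : R) : R :=
  2 * INR n * F_nl omega p q u - (INR n - 2) * u * f_nl omega p q u.

(* Main.v *)
From Stdlib Require Import Reals Lra.
Require Import Defs.
Open Scope R_scope.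

Lemma sign_change (phi : R -> R) (c x0 : R) :
  0 < x0 -> x0 <= c -> phi x0 < 0 -> 0 < phi c -> continuity_pt phi c ->
  (forall x y, 0 < x -> x < y -> y <= c -> phi x < phi y) ->
  exists B, 0 < B /\ B < c /\ (forall u, 0 < u < B -> phi u < 0) /\
     (forall u, B < u < c -> phi u > 0).
Proof.
  intros Hx0 Hx0c Hp0 Hpc Hcont Hinc.
  destruct (Hcont (phi c) Hpc) as [al [Hal Hd]].
  set (E := fun u => 0 < u <= c /\ phi u < 0).
  assert (HEb : forall s, E s -> s <= c - al).
  { intros s [[Hs1 Hs2] Hs3]. destruct (Rle_dec s (c - al)) as [h|h]; [exact h|].
    exfalso. assert (Hdd := Hd s). simpl in Hdd. unfold R_dist in Hdd.
    assert (Rabs (phi s - phi c) < phi c).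
    { destruct (Req_dec s c) as [->|hne]; [lra|]. apply Hdd. split; [split; [exact I| auto]|]. rewrite Rabs_left1; lra. }
    rewrite Rabs_left1 in H; lra. }
  destruct (completeness E) as [B [HB1 HB2]].
  { exists (c - al). intros s Hs. now apply HEb. }
  { exists x0. unfold E; lra. }
  assert (Hx0B : x0 <= B) by (apply HB1; unfold E; lra).
  assert (HBc : B <= c - al) by (apply HB2; intros s Hs; now apply HEb).
  exists B. split; [lra|]. split; [lra|]. split.
  - intros u [Hu1 Hu2].
    destruct (Rlt_dec (phi u) 0) as [h|h]; [exact h|].
    exfalso. assert (Hub : is_upper_bound E u).
    { intros s [[Hs1 Hs2] Hs3]. destruct (Rle_dec s u) as [h'|h']; [exact h'|].
      assert (phi u < phi s) by (apply Hinc; lra). lra. }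
    assert (B <= u) by (apply HB2; exact Hub). lra.
  - intros u [Hu1 Hu2].
    destruct (Rlt_dec 0 (phi u)) as [h|h]; [exact h|].
    exfalso. set (v := (B + u) / 2).
    assert (phi v < phi u) by (apply Hinc; unfold v; lra).
    assert (E v) by (unfold E; split; [unfold v; lra | lra]).
    assert (v <= B) by (apply HB1; auto). unfold v in *; lra.
Qed.

Definition ca (n : nat) (p : R) := 2 * INR n / (p + 1) - (INR n - 2).
Definition gg n omega p q u :=
  -2 * omega + ca n p * Rpower u (p - 1) - ca n q * Rpower u (q - 1).
Definition phi n omega p q u :=
  -2 * omega * Rpower u (1 - q) + ca n p * Rpower u (p - q) - ca n q.
Definition dphi n omega p q u :=
  -2 * omega * ((1 - q) * Rpower u (1 - q - 1)) + ca n p * ((p - q) * Rpower u (p - q - 1)).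
Definition DD n omega p q u := 2 * omega * (q - 1) - ca n p * (q - p) * Rpower u (p - 1).

Lemma Rpower_pos x y : 0 < Rpower x y.
Proof. unfold Rpower; apply exp_pos. Qed.

Lemma Rpower_shift u e : 0 < u -> Rpower u (e + 1) = u * Rpower u e.
Proof. intros Hu. rewrite Rpower_plus, Rpower_1 by exact Hu. ring. Qed.

Lemma Sigma_eq n omega p q u : 1 < p -> p < q -> 0 < u ->
  Sigma n omega p q u = u ^ 2 * gg n omega p q u.
Proof.
  intros Hp Hq Hu.
  unfold Sigma, F_nl, f_nl, gg, ca.
  assert (E1 : forall e, Rpower u e = u * Rpower u (e - 1)).
  { intros e. rewrite <- Rpower_shift by exact Hu. f_equal; ring. }
  assert (E2 : forall e, Rpower u (e + 1) = u * (u * Rpower u (e - 1))).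
  { intros e. rewrite E1. rewrite (E1 (e + 1 - 1)). f_equal. f_equal. f_equal. ring. }
  rewrite (E2 p), (E2 q), (E1 p), (E1 q).
  field. lra.
Qed.

Lemma phi_eq n omega p q u : 0 < u ->
  phi n omega p q u = Rpower u (1 - q) * gg n omega p q u.
Proof.
  intros Hu. unfold phi, gg.
  replace (p - q) with ((1 - q) + (p - 1)) by ring.
  rewrite Rpower_plus.
  assert (Rpower u (1 - q) * Rpower u (q - 1) = 1).
  { rewrite <- Rpower_plus. replace (1 - q + (q - 1)) with 0 by ring. apply Rpower_O; exact Hu. }
  replace (ca n q) with (ca n q * (Rpower u (1 - q) * Rpower u (q - 1))) at 1 by (rewrite H; ring).
  ring.
Qed.

Lemma phi_deriv n omega p q x : 0 < x ->
  derivable_pt_lim (phi n omega p q) x (dphi n omega p q x).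
Proof.
  intros Hx.
  assert (H := derivable_pt_lim_minus _ _ x _ _
    (derivable_pt_lim_plus _ _ x _ _
      (derivable_pt_lim_scal _ (-2 * omega) x _ (derivable_pt_lim_power x (1 - q) Hx))
      (derivable_pt_lim_scal _ (ca n p) x _ (derivable_pt_lim_power x (p - q) Hx)))
    (derivable_pt_lim_const (ca n q) x)).
  unfold dphi. replace (-2 * omega * ((1 - q) * Rpower x (1 - q - 1)) + ca n p * ((p - q) * Rpower x (p - q - 1)))
    with (-2 * omega * ((1 - q) * Rpower x (1 - q - 1)) + ca n p * ((p - q) * Rpower x (p - q - 1)) - 0) by ring.
  exact H.
Qed.

Lemma dphi_eq n omega p q x :
  dphi n omega p q x = Rpower x (- q) * DD n omega p q x.
Proof.
  unfold dphi, DD.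
  replace (1 - q - 1) with (- q) by ring.
  replace (p - q - 1) with (- q + (p - 1)) by ring.
  rewrite Rpower_plus. ring.
Qed.

Lemma phi_incr n omega p q x y : 0 < x -> x < y ->
  (forall t, x < t < y -> 0 < DD n omega p q t) -> phi n omega p q x < phi n omega p q y.
Proof.
  intros Hx Hxy HD.
  destruct (MVT_cor2 (phi n omega p q) (dphi n omega p q) x y Hxy) as [c [Hc1 Hc2]].
  { intros c Hc. apply phi_deriv. lra. }
  rewrite dphi_eq in Hc1.
  assert (0 < Rpower c (-q) * DD n omega p q c).
  { apply Rmult_lt_0_compat. apply Rpower_pos. apply HD; lra. }
  nra.
Qed.

Lemma phi_decr n omega p q x y : 0 < x -> x < y ->
  (forall t, x < t < y -> DD n omega p q t < 0) -> phi n omega p q y < phi n omega p q x.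
Proof.
  intros Hx Hxy HD.
  destruct (MVT_cor2 (phi n omega p q) (dphi n omega p q) x y Hxy) as [c [Hc1 Hc2]].
  { intros c Hc. apply phi_deriv. lra. }
  rewrite dphi_eq in Hc1.
  assert (0 < Rpower c (-q) * - DD n omega p q c).
  { apply Rmult_lt_0_compat. apply Rpower_pos. assert (H:=HD c Hc2). lra. }
  nra.
Qed.
Lemma gg_ustar n omega p q : 1 < p -> p < q -> 0 < omega -> omega < omega_pq p q ->
  let K := (p - 1) * (q + 1) / ((p + 1) * (q - 1)) in
  0 < gg n omega p q (Rpower K (1 / (q - p))).
Proof.
  intros Hp Hq Ho Hw K.
  assert (HK : 0 < K).
  { unfold K. apply Rdiv_lt_0_compat; apply Rmult_lt_0_compat; lra. }
  set (P := Rpower K ((p - 1) / (q - p))).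
  assert (E1 : Rpower (Rpower K (1 / (q - p))) (p - 1) = P).
  { unfold P. rewrite Rpower_mult. f_equal. field. lra. }
  assert (E2 : Rpower (Rpower K (1 / (q - p))) (q - 1) = P * K).
  { replace (q - 1) with ((p - 1) + (q - p)) by ring.
    rewrite Rpower_plus, E1, Rpower_mult.
    replace (1 / (q - p) * (q - p)) with 1 by (field; lra).
    rewrite Rpower_1 by exact HK. reflexivity. }
  unfold gg. rewrite E1, E2.
  unfold omega_pq in Hw. fold K in Hw. fold P in Hw.
  assert (Hab : ca n p - ca n q * K = 4 * (q - p) / ((p + 1) * (q - 1))).
  { unfold ca, K. field. repeat split; lra. }
  replace (-2 * omega + ca n p * P - ca n q * (P * K)) with (-2 * omega + P * (ca n p - ca n q * K)) by ring.
  rewrite Hab.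
  replace (P * (4 * (q - p) / ((p + 1) * (q - 1)))) with (2 * (2 * (q - p) / ((p + 1) * (q - 1)) * P)) by (field; lra).
  lra.
Qed.

Lemma gg_small n omega p q c : 1 < p -> p < q -> 0 < omega -> 0 < c ->
  exists x0, 0 < x0 <= c /\ gg n omega p q x0 < 0.
Proof.
  intros Hp Hq Ho Hc.
  set (M := Rabs (ca n p) + Rabs (ca n q) + 1).
  assert (HM : 1 <= M) by (unfold M; pose proof (Rabs_pos (ca n p)); pose proof (Rabs_pos (ca n q)); lra).
  set (r := Rpower (omega / M) (1 / (p - 1))).
  assert (Hr : 0 < r) by apply Rpower_pos.
  set (x0 := Rmin c (Rmin 1 r)).
  assert (Hx0 : 0 < x0).
  { unfold x0. apply Rmin_glb_lt; [lra|]. apply Rmin_glb_lt; lra. }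
  assert (Hx01 : x0 <= 1) by (unfold x0; eapply Rle_trans; [apply Rmin_r|apply Rmin_l]).
  assert (Hx0r : x0 <= r) by (unfold x0; eapply Rle_trans; [apply Rmin_r|apply Rmin_r]).
  exists x0. split; [split; [lra | apply Rmin_l]|].
  set (X := Rpower x0 (p - 1)).
  assert (HX0 : 0 < X) by apply Rpower_pos.
  assert (HX : X <= omega / M).
  { unfold X. replace (omega / M) with (Rpower r (p - 1)).
    - apply Rle_Rpower_l; lra.
    - unfold r. rewrite Rpower_mult. replace (1 / (p - 1) * (p - 1)) with 1 by (field; lra).
      apply Rpower_1. apply Rdiv_lt_0_compat; lra. }
  assert (HY : Rpower x0 (q - 1) <= X).
  { replace (q - 1) with ((p - 1) + (q - p)) by ring. rewrite Rpower_plus. fold X.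
    assert (Rpower x0 (q - p) <= 1).
    { assert (E1 : Rpower 1 (q - p) = 1) by (unfold Rpower; rewrite ln_1, Rmult_0_r; apply exp_0).
      rewrite <- E1. apply Rle_Rpower_l; lra. }
    pose proof (Rpower_pos x0 (q - p)). nra. }
  assert (HY0 : 0 < Rpower x0 (q - 1)) by apply Rpower_pos.
  unfold gg. fold X.
  assert (ca n p * X <= Rabs (ca n p) * X) by (apply Rmult_le_compat_r; [lra| apply Rle_abs]).
  assert (- ca n q * Rpower x0 (q - 1) <= Rabs (ca n q) * X).
  { apply Rle_trans with (Rabs (ca n q) * Rpower x0 (q - 1)).
    - apply Rmult_le_compat_r; [lra|]. rewrite <- Rabs_Ropp. apply Rle_abs.
    - apply Rmult_le_compat_l; [apply Rabs_pos | exact HY]. }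
  assert ((Rabs (ca n p) + Rabs (ca n q)) * X <= (M - 1) * (omega / M)).
  { apply Rmult_le_compat; [pose proof (Rabs_pos (ca n p)); pose proof (Rabs_pos (ca n q)); lra | lra | unfold M; lra | exact HX]. }
  assert ((M - 1) * (omega / M) < 2 * omega).
  { replace ((M - 1) * (omega / M)) with (omega - omega / M) by (field; lra).
    assert (0 < omega / M) by (apply Rdiv_lt_0_compat; lra). lra. }
  lra.
Qed.

Lemma phi_sign n omega p q u : 0 < u ->
  (phi n omega p q u < 0 <-> gg n omega p q u < 0) /\ (phi n omega p q u > 0 <-> gg n omega p q u > 0).
Proof.
  intros Hu. rewrite phi_eq by exact Hu. pose proof (Rpower_pos u (1 - q)).
  split; split; intros; nra.
Qed.

Lemma Sigma_sign n omega p q u : 1 < p -> p < q -> 0 < u ->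
  (Sigma n omega p q u < 0 <-> gg n omega p q u < 0) /\ (Sigma n omega p q u > 0 <-> gg n omega p q u > 0).
Proof.
  intros Hp Hq Hu. rewrite Sigma_eq by assumption. assert (0 < u ^ 2) by (simpl; nra).
  split; split; intros; nra.
Qed.

Theorem theorem1 (n : nat) (p q omega : R) :
  1 < p -> p < q -> 0 < omega -> omega < omega_pq p q ->
  exists B : R, 0 < B /\
    (forall u, 0 < u < B -> Sigma n omega p q u < 0) /\
    ((exists C : R, B < C /\ forall u, B < u < C -> Sigma n omega p q u > 0) \/
     (forall u, B < u -> Sigma n omega p q u > 0)).
Proof.
  intros Hp Hq Ho Hw.
  pose proof (gg_ustar n omega p q Hp Hq Ho Hw) as Hus. simpl in Hus.
  set (us := Rpower ((p - 1) * (q + 1) / ((p + 1) * (q - 1))) (1 / (q - p))) in Hus.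
  assert (Hus0 : 0 < us) by apply Rpower_pos.
  assert (Hpus : 0 < phi n omega p q us) by (apply (proj2 (phi_sign n omega p q us Hus0)); exact Hus).
  assert (Hc : exists c, 0 < c /\ 0 < phi n omega p q c /\
     (forall x y, 0 < x -> x < y -> y <= c -> phi n omega p q x < phi n omega p q y)).
  { destruct (Rle_dec (ca n p) 0) as [Ha|Ha].
    - exists us. split; [exact Hus0|]. split; [exact Hpus|].
      intros x y Hx Hxy Hyc. apply phi_incr; try assumption.
      intros t Ht. unfold DD. pose proof (Rpower_pos t (p - 1)).
      assert (0 <= - ca n p * (q - p) * Rpower t (p - 1)).
      { apply Rmult_le_pos; [apply Rmult_le_pos|]; lra. }
      nra.
    - set (K1 := 2 * omega * (q - 1) / (ca n p * (q - p))).
      assert (HK1 : 0 < K1).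
      { unfold K1. apply Rdiv_lt_0_compat; [nra|]. apply Rmult_lt_0_compat; lra. }
      set (u1 := Rpower K1 (1 / (p - 1))).
      assert (Hu1 : 0 < u1) by apply Rpower_pos.
      assert (Hu1p : Rpower u1 (p - 1) = K1).
      { unfold u1. rewrite Rpower_mult. replace (1 / (p - 1) * (p - 1)) with 1 by (field; lra).
        apply Rpower_1; exact HK1. }
      assert (HDpos : forall t, 0 < t < u1 -> 0 < DD n omega p q t).
      { intros t Ht. unfold DD.
        assert (Rpower t (p - 1) < K1) by (rewrite <- Hu1p; apply Rlt_Rpower_l; lra).
        assert (ca n p * (q - p) * Rpower t (p - 1) < ca n p * (q - p) * K1).
        { apply Rmult_lt_compat_l; [apply Rmult_lt_0_compat; lra | assumption]. }
        replace (ca n p * (q - p) * K1) with (2 * omega * (q - 1)) in H0 by (unfold K1; field; split; lra).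
        lra. }
      assert (HDneg : forall t, u1 < t -> DD n omega p q t < 0).
      { intros t Ht. unfold DD.
        assert (K1 < Rpower t (p - 1)) by (rewrite <- Hu1p; apply Rlt_Rpower_l; lra).
        assert (ca n p * (q - p) * K1 < ca n p * (q - p) * Rpower t (p - 1)).
        { apply Rmult_lt_compat_l; [apply Rmult_lt_0_compat; lra | assumption]. }
        replace (ca n p * (q - p) * K1) with (2 * omega * (q - 1)) in H0 by (unfold K1; field; split; lra).
        lra. }
      destruct (Rle_dec us u1) as [Hle|Hlt].
      + exists us. split; [exact Hus0|]. split; [exact Hpus|].
        intros x y Hx Hxy Hyc. apply phi_incr; try assumption.
        intros t Ht. apply HDpos; lra.
      + exists u1. split; [exact Hu1|]. split.
        * assert (phi n omega p q us < phi n omega p q u1).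
          { apply phi_decr; try lra. intros t Ht. apply HDneg; lra. }
          lra.
        * intros x y Hx Hxy Hyc. apply phi_incr; try assumption.
          intros t Ht. apply HDpos; lra. }
  destruct Hc as [c [Hc0 [Hpc Hinc]]].
  destruct (gg_small n omega p q c Hp Hq Ho Hc0) as [x0 [Hx0 Hgx0]].
  assert (Hpx0 : phi n omega p q x0 < 0) by (apply (proj1 (phi_sign n omega p q x0 (proj1 Hx0))); exact Hgx0).
  assert (Hcont : continuity_pt (phi n omega p q) c).
  { apply derivable_continuous_pt. exists (dphi n omega p q c). apply phi_deriv; exact Hc0. }
  destruct (sign_change (phi n omega p q) c x0 (proj1 Hx0) (proj2 Hx0) Hpx0 Hpc Hcont Hinc)
    as [B [HB0 [HBc [HL HR]]]].
  exists B. split; [exact HB0|]. split.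
  - intros u Hu. apply (proj1 (Sigma_sign n omega p q u Hp Hq (proj1 Hu))).
    apply (proj1 (phi_sign n omega p q u (proj1 Hu))). apply HL; exact Hu.
  - left. exists c. split; [exact HBc|]. intros u Hu.
    assert (Hu0 : 0 < u) by lra.
    apply (proj2 (Sigma_sign n omega p q u Hp Hq Hu0)).
    apply (proj2 (phi_sign n omega p q u Hu0)). apply HR; exact Hu.
Qed.
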